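(* Let $H$ be a finite-dimensional complex Hilbert space and let $\mathcal{Pos}(H)$ be the set of positive operators on $H$ (linear $A\colon H\to H$ with $\langle Ax,x\rangle\geq 0$ for all $x\in H$). Then $\mathcal{Pos}(H)$ is a module over the semiring $\mathbb{R}_{\geq 0}$ of non-negative reals, and the map $$\mathrm{hs}_{\mathcal{Pos}}\colon\mathcal{Pos}(H)\longrightarrow\mathcal{Pos}(H)^{*}=\big(\mathcal{Pos}(H)\multimap\mathbb{R}_{\geq0}\big),\qquad \mathrm{hs}_{\mathcal{Pos}}(A)(B)=\mathrm{tr}(AB),$$ is a well-defined isomorphism in $\mathbf{Mod}_{\mathbb{R}_{\geq0}}$, natural in $H$ in the sense that for every linear map $C\colon H\to K$ between finite-dimensional Hilbert spaces, $\mathcal{Pos}(C)^{*}\circ\mathrm{hs}_{\mathcal{Pos},K}=\mathrm{hs}_{\mathcal{Pos},H}\circ\mathcal{Pos}(C^\dagger)$, where $\mathcal{Pos}(C)^*(f)=f\circ\mathcal{Pos}(C)$. Moreover, the functors $\mathcal{Pos}\colon\mathbf{FdHilb}\to\mathbf{Mod}_{\mathbb{R}_{\geq0}}$ and $\mathcal{Pos}\colon\mathbf{FdHilb}^{\mathrm{op}}\to\mathbf{Mod}_{\mathbb{R}_{\geq0}}^{\mathrm{op}}$ together with these isomorphisms form a map of adjunctions (in the sense of Mac Lane, IV.7, with functor squares commuting up to the isomorphisms $\mathrm{hs}_{\mathcal{Pos}}$) from the adjunction $(-)^{\dagger}\dashv(-)^{\dagger}$ between $\mathbf{FdHilb}$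 and $\mathbf{FdHilb}^{\mathrm{op}}$ to the adjunction $((-)\multimap\mathbb{R}_{\geq0})\dashv((-)\multimap\mathbb{R}_{\geq0})$ between $\mathbf{Mod}_{\mathbb{R}_{\geq0}}$ and $\mathbf{Mod}_{\mathbb{R}_{\geq0}}^{\mathrm{op}}$.
   Context: A module over a commutative semiring $S$ is a commutative monoid with a scalar multiplication $S\times M\to M$ that is additive in each argument, satisfies $1\bullet x=x$ and $(st)\bullet x=s\bullet(t\bullet x)$; $\mathbf{Mod}_S$ is the category of $S$-modules and $S$-linear maps, and $M\multimap N$ is the $S$-module of linear maps $M\to N$. The functor $(-)\multimap\mathbb{R}_{\geq0}\colon\mathbf{Mod}_{\mathbb{R}_{\geq0}}\to\mathbf{Mod}_{\mathbb{R}_{\geq0}}^{\mathrm{op}}$ (precomposition on maps) is adjoint to itself via swapping arguments. $\mathbf{FdHilb}$ is the category of finite-dimensional complex Hilbert spaces and linear maps; $C^\dagger$ is the adjoint of $C$; $(-)^\dagger\colon\mathbf{FdHilb}\to\mathbf{FdHilb}^{\mathrm{op}}$ is identity on objects, $C\mapsto C^\dagger$ on maps, and is self-adjoint. The functor $\mathcal{Pos}$ sends $C\colon H\to K$ to $\mathcal{Pos}(C)(A)=CAC^{\dagger}$. $\mathrm{tr}$ is the trace. *)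

(* Defs.v *)
From HB Require Import structures.
From mathcomp Require Import all_boot all_order all_algebra.
From mathcomp Require Import reals.
From mathcomp.real_closed Require Import complex.
Set Implicit Arguments. Unset Strict Implicit. Unset Printing Implicit Defensive.
Import Order.TTheory GRing.Theory Num.Theory.
Local Open Scope ring_scope.

(* Objects of FdHilb are modelled (up to unitary isomorphism) as C^n, n : nat,
   with the standard inner product <x,y> = y^* x; linear maps H -> K are
   matrices 'M[C]_(m, n) acting on column vectors (dim H = n, dim K = m). *)
Section Defs.
Variable R : realType.
Local Notation C := R[i].

Definition adj m n (A : 'M[C]_(m, n)) : 'M[C]_(n, m) := map_mx Num.conj A^T.

(* positive operator: <A x, x> >= 0 for all x (in the order of C,
   0 <= z means z is a non-negative real) *)
Definition posop n (A : 'M[C]_n) : Prop :=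
  forall x : 'cV[C]_n, 0 <= ((adj x) *m A *m x) 0 0.

Definition PosMap m n (Cm : 'M[C]_(m, n)) (A : 'M[C]_n) : 'M[C]_m :=
  Cm *m A *m adj Cm.

Definition hs n (A B : 'M[C]_n) : C := \tr (A *m B).

(* The semiring R_{>=0} is realised as the non-negative elements of C
   (0 <= r in C iff r is a non-negative real), acting by scaling. *)
Definition pos_dual_map n (f : 'M[C]_n -> C) : Prop :=
  [/\ forall B, posop B -> 0 <= f B,
      forall B1 B2, posop B1 -> posop B2 -> f (B1 + B2) = f B1 + f B2
    & forall (r : C) B, 0 <= r -> posop B -> f (r *: B) = r * f B].
End Defs.

(* Main.v *)
Require Import Defs.
From HB Require Import structures.
From mathcomp Require Import all_boot all_order all_algebra.
From mathcomp Require Import reals.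
From mathcomp.real_closed Require Import complex.
Import Order.TTheory GRing.Theory Num.Theory.
Local Open Scope ring_scope.
From mathcomp Require Import ring zify.
Set Implicit Arguments. Unset Strict Implicit. Unset Printing Implicit Defensive.


Section Aux.
Variable R : realType.
Local Notation C := R[i].

Lemma dagD m n (A B : 'M[C]_(m, n)) : adj (A + B) = adj A + adj B.
Proof. by apply/matrixP=> i j; rewrite !mxE rmorphD. Qed.

Lemma dagN m n (A : 'M[C]_(m, n)) : adj (- A) = - adj A.
Proof. by apply/matrixP=> i j; rewrite !mxE rmorphN. Qed.

Lemma dagZ m n c (A : 'M[C]_(m, n)) : adj (c *: A) = c^* *: adj A.
Proof. by apply/matrixP=> i j; rewrite !mxE rmorphM. Qed.

Lemma dag_mul m n p (A : 'M[C]_(m, n)) (B : 'M[C]_(n, p)) :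
  adj (A *m B) = adj B *m adj A.
Proof. by rewrite /adj trmx_mul map_mxM. Qed.

Lemma dagK m n (A : 'M[C]_(m, n)) : adj (adj A) = A.
Proof. by apply/matrixP=> i j; rewrite !mxE conjCK. Qed.

Lemma dag00 (M : 'M[C]_1) : adj M 0 0 = (M 0 0)^*.
Proof. by rewrite !mxE. Qed.

Definition sf n (A : 'M[C]_n) (x y : 'cV[C]_n) : C := (adj x *m A *m y) 0 0.
Definition op n (x y : 'cV[C]_n) : 'M[C]_n := x *m adj y.
Definition ev n a : 'cV[C]_n := delta_mx a 0.

Lemma sfDl n (A : 'M[C]_n) x1 x2 y : sf A (x1 + x2) y = sf A x1 y + sf A x2 y.
Proof. by rewrite /sf dagD !mulmxDl mxE. Qed.
Lemma sfDr n (A : 'M[C]_n) x y1 y2 : sf A x (y1 + y2) = sf A x y1 + sf A x y2.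
Proof. by rewrite /sf !mulmxDr mxE. Qed.
Lemma sfZl n (A : 'M[C]_n) c x y : sf A (c *: x) y = c^* * sf A x y.
Proof. by rewrite /sf dagZ -!scalemxAl mxE. Qed.
Lemma sfZr n (A : 'M[C]_n) c x y : sf A x (c *: y) = c * sf A x y.
Proof. by rewrite /sf -!scalemxAr mxE. Qed.
Lemma sfDm n (A B : 'M[C]_n) x y : sf (A + B) x y = sf A x y + sf B x y.
Proof. by rewrite /sf mulmxDr mulmxDl mxE. Qed.
Lemma sfNm n (A : 'M[C]_n) x y : sf (- A) x y = - sf A x y.
Proof. by rewrite /sf mulmxN mulNmx mxE. Qed.
Lemma sfZm n (A : 'M[C]_n) c x y : sf (c *: A) x y = c * sf A x y.
Proof. by rewrite /sf -scalemxAr -scalemxAl mxE. Qed.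

Lemma dag_ev n (a : 'I_n) : adj (ev a) = delta_mx 0 a.
Proof. by apply/matrixP=> i j; rewrite !mxE (ord1 i) eqxx /= rmorph_nat andbC. Qed.

Lemma sf_ev n (A : 'M[C]_n) a b : sf A (ev a) (ev b) = A a b.
Proof. by rewrite /sf dag_ev -rowE /ev -colE !mxE. Qed.

Lemma op_ev n (a b : 'I_n) : op (ev a) (ev b) = delta_mx a b.
Proof. by rewrite /op dag_ev /ev mul_delta_mx. Qed.

Lemma sf_quad n (A : 'M[C]_n) x : \tr (A *m op x x) = sf A x x.
Proof.
rewrite /op /sf mulmxA mxtrace_mulC mulmxA /mxtrace big_ord1 //.
Qed.

Lemma opDl n (x1 x2 y : 'cV[C]_n) : op (x1 + x2) y = op x1 y + op x2 y.
Proof. by rewrite /op mulmxDl. Qed.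
Lemma opDr n (x y1 y2 : 'cV[C]_n) : op x (y1 + y2) = op x y1 + op x y2.
Proof. by rewrite /op dagD mulmxDr. Qed.
Lemma opZl n c (x y : 'cV[C]_n) : op (c *: x) y = c *: op x y.
Proof. by rewrite /op scalemxAl. Qed.
Lemma opZr n c (x y : 'cV[C]_n) : op x (c *: y) = c^* *: op x y.
Proof. by rewrite /op dagZ scalemxAr. Qed.

Lemma sf_op n (x y : 'cV[C]_n) :
  sf (op x x) y y = (adj y *m x) 0 0 * ((adj y *m x) 0 0)^*.
Proof.
rewrite /sf /op mulmxA -[_ *m adj x *m _]mulmxA.
have -> : adj x *m y = adj (adj y *m x) by rewrite dag_mul dagK.
by rewrite [LHS]mxE big_ord1 dag00.
Qed.

Lemma posop_op n (x : 'cV[C]_n) : posop (op x x).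
Proof. move=> y; have := sf_op x y; rewrite /sf => ->; exact: mul_conjC_ge0. Qed.

End Aux.
Arguments ev {R n} a.



Section Aux2.
Variable R : realType.
Local Notation C := R[i].

Lemma quad_zero n (D : 'M[C]_n) : (forall x, sf D x x = 0) -> D = 0.
Proof.
move=> H; apply/matrixP => a b; rewrite mxE.
have h1 := H (ev a); have h2 := H (ev b); rewrite sf_ev in h1; rewrite sf_ev in h2.
have h3 := H (ev a + ev b); rewrite !sfDl !sfDr !sf_ev h1 h2 in h3.
have h4 := H (ev a + 'i *: ev b).
rewrite !sfDl !sfDr !sfZl !sfZr !sf_ev h1 h2 conjCi in h4.
have e : D b a = - D a b by apply/eqP; rewrite -addr_eq0 -h3; apply/eqP; ring.
have : (2 * 'i) * D a b = 0 by rewrite -[RHS]h4 e; ring.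
move/eqP; rewrite mulf_eq0 => /orP[|/eqP //].
rewrite mulf_eq0 pnatr_eq0 /=; by move: (@neq0Ci C) => /negbTE ->.
Qed.

Lemma ge0_conj (z : C) : 0 <= z -> z^* = z.
Proof. by move=> /ger0_real /conj_Creal. Qed.

Lemma herm n (B : 'M[C]_n) : posop B -> adj B = B.
Proof.
move=> pB; apply/eqP; rewrite -subr_eq0; apply/eqP; apply: quad_zero => x.
rewrite sfDm sfNm.
have -> : sf (adj B) x x = (sf B x x)^*.
  by rewrite /sf -dag00 !dag_mul dagK mulmxA.
by rewrite ge0_conj ?subrr //; apply: pB.
Qed.

Lemma hermE n (B : 'M[C]_n) i j : posop B -> (B i j)^* = B j i.
Proof. by move=> /herm {2}<-; rewrite !mxE. Qed.

End Aux2.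



Section Aux3.
Variable R : realType.
Local Notation C := R[i].

Lemma conjM (x y : C) : (x * y)^* = x^* * y^*. Proof. exact: rmorphM. Qed.
Lemma conjV (x : C) : (x^-1)^* = (x^*)^-1. Proof. exact: fmorphV. Qed.

Lemma posop_sf n (B : 'M[C]_n) x : posop B -> 0 <= sf B x x.
Proof. by move=> pB; apply: pB. Qed.

Lemma diag_ge0 n (B : 'M[C]_n) k : posop B -> 0 <= B k k.
Proof. by move=> pB; rewrite -sf_ev; apply: posop_sf. Qed.

Lemma row_zero n (B : 'M[C]_n) k j : posop B -> B k k = 0 -> B j k = 0.
Proof.
move=> pB bk; apply/eqP; apply/negPn/negP => w0.
set w := B j k in w0.
set c := -(B j j + 1) / w.
have h := posop_sf (ev j + c *: ev k) pB.
rewrite !sfDl !sfDr !sfZl !sfZr !sf_ev bk in h.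
have Bkj : B k j = w^* by rewrite hermE.
have Bjj : (B j j)^* = B j j by rewrite ge0_conj // diag_ge0.
have cw : c * w = -(B j j + 1) by rewrite /c mulfVK.
have cw' : c^* * B k j = -(B j j + 1).
  rewrite Bkj -rmorphM cw; apply: conj_Creal.
  by rewrite realN realD ?real1 // ger0_real // diag_ge0.
rewrite -/w cw cw' !mulr0 addr0 in h.
have := addr_ge0 h (diag_ge0 j pB).
rewrite (_ : _ + _ = - 2); last by ring.
by rewrite oppr_ge0 lern0.
Qed.

Lemma z3 (a b : C) : 0 - 0 * a / b = 0. Proof. by rewrite !mul0r subr0. Qed.
Lemma z4 (a b : C) : 0 - a * 0 / b = 0. Proof. by rewrite mulr0 !mul0r subr0. Qed.

Lemma decomp n m (B : 'M[C]_n) : posop B ->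
  (forall i j : 'I_n, ((i < n - m) || (j < n - m))%N -> B i j = 0 :> C) ->
  exists vs : seq 'cV[C]_n, B = \sum_(v <- vs) op v v.
Proof.
elim: m B => [|m IH] B pB Hz.
  exists [::]; rewrite big_nil; apply/matrixP=> i j; rewrite mxE Hz //.
  by rewrite subn0 ltn_ord.
case: (ltnP (n - m.+1) n) => [kn | nk]; last first.
  exists [::]; rewrite big_nil; apply/matrixP=> i j; rewrite mxE Hz //.
  by rewrite (leq_trans (ltn_ord i) nk).
set kk := Ordinal kn.
have Hstep : forall i : 'I_n, (i < n - m)%N -> (i < n - m.+1)%N \/ i = kk.
  move=> i hi; case: (ltnP i (n - m.+1)) => h; [by left|right].
  by apply/val_inj => /=; lia.
have b0 : 0 <= B kk kk by apply: diag_ge0.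
case: (eqVneq (B kk kk) 0) => bk.
  have c0 : forall j, B j kk = 0 by move=> j; apply: row_zero.
  have r0 : forall j, B kk j = 0 by move=> j; rewrite -hermE // c0 rmorph0.
  apply: IH => // i j /orP[] hi.
    by case: (Hstep i hi) => [h|->]; [apply: Hz; rewrite h | apply: r0].
  by case: (Hstep j hi) => [h|->]; [apply: Hz; rewrite h orbT | apply: c0].
set b := B kk kk in b0 bk.
set s := sqrtC b.
have sc : s^* = s by rewrite ge0_conj // sqrtC_ge0.
have ss : s * s = b by rewrite -expr2 sqrtCK.
have s0 : s != 0 by apply/eqP => s0; move: bk; rewrite -ss s0 mul0r eqxx.
set v := s^-1 *: col kk B.
have opvE : forall i j, op v v i j = B i kk * B kk j / b.
  move=> i j; rewrite /op !mxE big_ord1 !mxE conjM conjV sc hermE //.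
  by rewrite -ss; field.
set B' := B - op v v.
have B'E : forall i j, B' i j = B i j - B i kk * B kk j / b.
  by move=> i j; rewrite /B' [LHS]mxE [X in _ + X]mxE opvE.
have rowk : forall j, B' kk j = 0 by move=> j; rewrite B'E -/b; field.
have colk : forall i, B' i kk = 0 by move=> i; rewrite B'E -/b; field.
have e1 : B' *m ev kk = 0.
  by rewrite /ev -colE; apply/matrixP => i j; rewrite [LHS]mxE colk mxE.
have e2 : adj (ev kk) *m B' = 0.
  by rewrite dag_ev -rowE; apply/matrixP => i j; rewrite [LHS]mxE rowk mxE.
have h1 : forall x, sf B' x (ev kk) = 0 by move=> x; rewrite /sf -mulmxA e1 mulmx0 mxE.
have h2 : forall x, sf B' (ev kk) x = 0 by move=> x; rewrite /sf e2 mul0mx mxE.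
have pB' : posop B'.
  move=> x; rewrite -/(sf B' x x).
  set t := - (B *m x) kk 0 / b.
  set y := x + t *: ev kk.
  have -> : sf B' x x = sf B' y y.
    by rewrite /y !sfDl !sfDr !sfZl !sfZr !h1 !h2 !mulr0 !addr0.
  rewrite /B' sfDm sfNm sf_op.
  have -> : ((adj y *m v) 0 0)^* = 0.
    rewrite -dag00 dag_mul dagK /v dagZ -scalemxAl mxE.
    have -> : adj (col kk B) = row kk B.
      by rewrite -[in RHS](herm pB); apply/matrixP => i j; rewrite !mxE.
    rewrite -row_mul mxE /y mulmxDr -scalemxAr /ev -colE [X in _ * X]mxE [X in _ + X]mxE [col _ _ _ _]mxE -/b /t.
    by rewrite (_ : _ + _ = 0) ?mulr0 //; field.
  by rewrite mulr0 subr0; apply: posop_sf.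
have [|vs hv] := IH B' pB'; last first.
  exists (v :: vs); rewrite big_cons -hv /B' addrC subrK //.
move=> i j /orP[] hi.
  case: (Hstep i hi) => [h|->]; last exact: rowk.
  by rewrite B'E (Hz i j) ?h // (Hz i kk) ?h //; apply: z3.
case: (Hstep j hi) => [h|->]; last exact: colk.
by rewrite B'E (Hz i j) ?h ?orbT // (Hz kk j) ?h ?orbT //; apply: z4.
Qed.

Lemma decomp_full n (B : 'M[C]_n) : posop B ->
  exists vs : seq 'cV[C]_n, B = \sum_(v <- vs) op v v.
Proof. by move=> pB; apply: (@decomp n n B pB) => i j; rewrite subnn. Qed.

Lemma tr_ge0 n (A B : 'M[C]_n) : posop A -> posop B -> 0 <= \tr (A *m B).
Proof.
move=> pA pB; have [vs ->] := decomp_full pB.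
rewrite mulmx_sumr raddf_sum; apply: sumr_ge0 => v _.
have := posop_sf v pA; by rewrite -sf_quad.
Qed.

End Aux3.



Lemma zm1 (V : zmodType) (a b c d : V) : (a + b) + (c + d) - a - d = b + c.
Proof. by rewrite (addrC a b) -(addrA b a) (addrC a (c+d)) addrA addrK addrA addrK. Qed.

Lemma zm2 (V : zmodType) (a b c d : V) : a + d - ((a + b) + (c + d)) = - (b + c).
Proof. by apply: oppr_inj; rewrite opprK -(zm1 a b c d) opprB opprD addrA. Qed.

Section Aux4.
Variable R : realType.
Local Notation C := R[i].

Lemma posop0 n : posop (0 : 'M[C]_n).
Proof. by move=> x; rewrite mulmx0 mul0mx mxE. Qed.

Lemma posopD n (A B : 'M[C]_n) : posop A -> posop B -> posop (A + B).
Proof.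
move=> pA pB x; change (0 <= sf (A + B) x x); rewrite sfDm.
exact: addr_ge0 (pA x) (pB x).
Qed.

Lemma posopZ n r (A : 'M[C]_n) : 0 <= r -> posop A -> posop (r *: A).
Proof.
move=> r0 pA x; change (0 <= sf (r *: A) x x); rewrite sfZm.
exact: mulr_ge0 r0 (pA x).
Qed.

Lemma conjD (x y : C) : (x + y)^* = x^* + y^*. Proof. exact: rmorphD. Qed.
Lemma conjN (x : C) : (- x)^* = - x^*. Proof. exact: rmorphN. Qed.
Lemma conjn k : (k%:R : C)^* = k%:R. Proof. exact: rmorph_nat. Qed.

Lemma eD n (A B : 'M[C]_n) i j : (A + B) i j = A i j + B i j. Proof. by rewrite mxE. Qed.
Lemma eN n (A : 'M[C]_n) i j : (- A) i j = - A i j. Proof. by rewrite mxE. Qed.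
Lemma eZ n c (A : 'M[C]_n) i j : (c *: A) i j = c * A i j. Proof. by rewrite mxE. Qed.
Lemma eop n (x y : 'cV[C]_n) i j : op x y i j = x i 0 * (y j 0)^*.
Proof. by rewrite /op mxE big_ord1 !mxE. Qed.
Lemma vD n (x y : 'cV[C]_n) i : (x + y) i 0 = x i 0 + y i 0. Proof. by rewrite mxE. Qed.
Lemma vZ n c (x : 'cV[C]_n) i : (c *: x) i 0 = c * x i 0. Proof. by rewrite mxE. Qed.
Lemma evE n (a i : 'I_n) : (ev a : 'cV[C]_n) i 0 = (i == a)%:R.
Proof. by rewrite /ev mxE eqxx andbT. Qed.

Lemma opZZ n c (x : 'cV[C]_n) : op (c *: x) (c *: x) = (c * c^*) *: op x x.
Proof. by rewrite opZl opZr scalerA mulrC. Qed.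

Section Surj.
Variables (n : nat) (f : 'M[C]_n -> C).
Hypothesis hf : pos_dual_map f.

Lemma fD (B1 B2 : 'M[C]_n) : posop B1 -> posop B2 -> f (B1 + B2) = f B1 + f B2.
Proof. by case: hf => _ h _; apply: h. Qed.
Lemma fZ r (B : 'M[C]_n) : 0 <= r -> posop B -> f (r *: B) = r * f B.
Proof. by case: hf => _ _ h; apply: h. Qed.
Lemma f0 : f 0 = 0.
Proof. by have := fZ (r := 0) (lexx 0) (@posop0 n); rewrite scale0r mul0r. Qed.

Definition E a := op (ev a) (ev a) : 'M[C]_n.
Definition P a b := op (ev a + ev b) (ev a + ev b) : 'M[C]_n.
Definition Q a b := op (ev a + 'i *: ev b) (ev a + 'i *: ev b) : 'M[C]_n.
Definition al a := f (E a).
Definition be a b := f (P a b).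
Definition ga a b := f (Q a b).
Definition Am : 'M[C]_n := \matrix_(a, b)
  (if a == b then al a else ((be a b - al a - al b) - 'i * (ga a b - al a - al b)) / 2).
Definition F (X : 'M[C]_n) := \tr (Am *m X).

Lemma FD X Y : F (X + Y) = F X + F Y. Proof. by rewrite /F mulmxDr mxtraceD. Qed.
Lemma FZ c X : F (c *: X) = c * F X. Proof. by rewrite /F -scalemxAr mxtraceZ. Qed.
Lemma FB X Y : F (X - Y) = F X - F Y.
Proof. by rewrite FD -scaleN1r FZ mulN1r. Qed.
Lemma F0 : F 0 = 0. Proof. by rewrite /F mulmx0 mxtrace0. Qed.

Definition agree X := posop X /\ f X = F X.
Definition good X := exists P N, [/\ agree P, agree N & X = P - N].

Lemma agreeZ r X : 0 <= r -> agree X -> agree (r *: X).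
Proof. by move=> r0 [pX fX]; split; [apply: posopZ | rewrite fZ // fX FZ]. Qed.

Lemma agree_good X : agree X -> good X.
Proof.
move=> aX; exists X, 0; split => //; last by rewrite subr0.
by split; [apply: posop0 | rewrite f0 F0].
Qed.

Lemma goodD X Y : good X -> good Y -> good (X + Y).
Proof.
move=> [P1 [N1 [[p1 f1] [n1 g1] ->]]] [P2 [N2 [[p2 f2] [n2 g2] ->]]].
exists (P1 + P2), (N1 + N2); split.
- by split; [apply: posopD | rewrite fD // FD f1 f2].
- by split; [apply: posopD | rewrite fD // FD g1 g2].
by rewrite opprD addrACA.
Qed.

Lemma goodN X : good X -> good (- X).
Proof. by move=> [P1 [N1 [a1 b1 ->]]]; exists N1, P1; split => //; rewrite opprB. Qed.

Lemma goodB X Y : good X -> good Y -> good (X - Y).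
Proof. by move=> gX gY; apply: goodD => //; apply: goodN. Qed.

Lemma goodZ r X : r \is Num.real -> good X -> good (r *: X).
Proof.
move=> rr [P1 [N1 [a1 b1 ->]]].
case: (real_ge0P rr) => hr.
  exists (r *: P1), (r *: N1); split; try by apply: agreeZ.
  by rewrite scalerBr.
exists ((- r) *: N1), ((- r) *: P1); split; try by apply: agreeZ => //; rewrite oppr_ge0 ltW.
by rewrite scalerBr scaleNr scaleNr opprK addrC.
Qed.

Lemma good_sum (I : finType) (G : I -> 'M[C]_n) :
  (forall i, good (G i)) -> good (\sum_i G i).
Proof.
move=> h; apply: (big_ind good) => //; last exact: goodD.
by apply: agree_good; split; [apply: posop0 | rewrite f0 F0].
Qed.

Lemma good_agree X : good X -> posop X -> f X = F X.
Proof.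
move=> [P1 [N1 [[p1 f1] [n1 g1] eX]]] pX.
have : f P1 = f X + f N1 by rewrite -fD // eX subrK.
move/eqP; rewrite -subr_eq => /eqP <-.
by rewrite f1 g1 eX FB.
Qed.

Lemma Fop x : F (op x x) = sf Am x x.
Proof. exact: sf_quad. Qed.

Lemma PC a b : P a b = P b a. Proof. by rewrite /P addrC. Qed.

Lemma hii : 'i * 'i = -1 :> C. Proof. by rewrite -expr2 sqrCi. Qed.

Lemma lin3 (X Y Ea Eb : 'M[C]_n) :
  ((Ea + (- 'i) *: X) + ('i *: Y + Eb)) + ((Eb + (- 'i) *: Y) + ('i *: X + Ea))
  = 2%:R *: (Ea + Eb).
Proof. by apply/matrixP => i j; rewrite !mxE; ring. Qed.

Lemma ii1 : 'i * 'i^* = 1 :> C.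
Proof. by rewrite conjCi mulrN hii opprK. Qed.

Lemma QQ a b : Q a b + Q b a = 2%:R *: (E a + E b).
Proof.
by rewrite /Q /E !opDl !opDr !opZZ ii1 !scale1r !opZl !opZr conjCi lin3.
Qed.


Lemma agreeE a : agree (E a).
Proof. by split; [exact: posop_op | rewrite /E Fop sf_ev mxE eqxx]. Qed.

Lemma gaR a b : ga b a = 2%:R * (al a + al b) - ga a b.
Proof.
apply/eqP; rewrite eq_sym subr_eq addrC; apply/eqP.
rewrite /ga -[RHS]fD; try exact: posop_op.
rewrite QQ fZ; try by [apply: posopD; apply: posop_op | rewrite ler0n].
by rewrite fD; try exact: posop_op.
Qed.

Lemma beC a b : be b a = be a b. Proof. by rewrite /be PC. Qed.

Lemma agreeP a b : agree (P a b).
Proof.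
case: (eqVneq a b) => [<-|nab].
  rewrite /P (_ : ev a + ev a = (1 + 1) *: ev a); last by rewrite scalerDl scale1r.
  by rewrite opZZ; apply: agreeZ; [exact: mul_conjC_ge0 | exact: agreeE].
split; first exact: posop_op.
rewrite Fop !sfDl !sfDr !sf_ev !mxE !eqxx (negbTE nab) eq_sym (negbTE nab).
rewrite -/(be a b) beC gaR.
by field.
Qed.

Lemma agreeQ a b : agree (Q a b).
Proof.
case: (eqVneq a b) => [<-|nab].
  rewrite /Q (_ : ev a + 'i *: ev a = (1 + 'i) *: ev a); last by rewrite scalerDl scale1r.
  by rewrite opZZ; apply: agreeZ; [exact: mul_conjC_ge0 | exact: agreeE].
split; first exact: posop_op.
rewrite Fop !sfDl !sfDr !sfZl !sfZr !sf_ev !mxE !eqxx (negbTE nab) eq_sym (negbTE nab).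
rewrite -/(ga a b) beC gaR conjCi.
by field: hii.
Qed.

Lemma lin2 (X Y : 'M[C]_n) (zr zi : C) :
  zr *: (X + Y) + zi *: - ((- 'i) *: X + 'i *: Y) =
  (zr + 'i * zi) *: X + (zr - 'i * zi) *: Y.
Proof. by apply/matrixP => i j; rewrite !mxE; ring. Qed.



Lemma Tgood a b (z : C) :
  good (z *: op (ev a) (ev b) + z^* *: op (ev b) (ev a)).
Proof.
set zr := 'Re z; set zi := 'Im z.
have hz : z = zr + 'i * zi := Crect z.
have hzc : z^* = zr - 'i * zi by rewrite hz conjC_rect ?Creal_Re ?Creal_Im.
have eP : P a b - E a - E b = op (ev a) (ev b) + op (ev b) (ev a).
  by rewrite /P /E opDl !opDr zm1.
have eQ : E a + E b - Q a b = - ((- 'i) *: op (ev a) (ev b) + 'i *: op (ev b) (ev a)).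
  by rewrite /Q /E opDl !opDr opZZ ii1 scale1r opZl opZr conjCi zm2.
have -> : z *: op (ev a) (ev b) + z^* *: op (ev b) (ev a) =
   zr *: (P a b - E a - E b) + zi *: (E a + E b - Q a b).
  by rewrite eP eQ lin2 -hz -hzc.
apply: goodD; apply: goodZ; rewrite ?Creal_Re ?Creal_Im //.
  apply: goodB; last by apply: agree_good; apply: agreeE.
  apply: goodB; apply: agree_good; [exact: agreeP | exact: agreeE].
apply: goodB; last by apply: agree_good; apply: agreeQ.
apply: goodD; apply: agree_good; exact: agreeE.
Qed.


Lemma good_herm (M : 'M[C]_n) : adj M = M -> good M.
Proof.
move=> hM.
have e0 : \sum_a \sum_b M a b *: op (ev a) (ev b) = M.
  rewrite [RHS]matrix_sum_delta; apply: eq_bigr => a _; apply: eq_bigr => b _.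
  by rewrite op_ev.
have e1 : \sum_a \sum_b (M a b)^* *: op (ev b) (ev a) = M.
  rewrite exchange_big /= [RHS]matrix_sum_delta; apply: eq_bigr => a _.
  apply: eq_bigr => b _; rewrite op_ev.
  by rewrite -{2}hM !mxE.
have gMM : good (M + M).
  rewrite -[X in X + _]e0 -[X in _ + X]e1 -big_split /=.
  apply: good_sum => a; rewrite -big_split /=; apply: good_sum => b.
  exact: Tgood.
have -> : M = 2%:R^-1 *: (M + M).
  have h2 : 2%:R^-1 + 2%:R^-1 = 1 :> C by field.
  by rewrite scalerDr -scalerDl h2 scale1r.
by apply: goodZ => //; rewrite realV realn.
Qed.

Lemma surj : exists2 A : 'M[C]_n, posop A & forall B, posop B -> f B = hs A B.
Proof.
exists Am.
  move=> x; change (0 <= sf Am x x); rewrite -Fop -good_agree.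
  - by case: hf => h _ _; apply: h; apply: posop_op.
  - by apply: good_herm; apply: herm; apply: posop_op.
  - exact: posop_op.
move=> B pB; rewrite good_agree //; apply: good_herm; exact: herm.
Qed.

End Surj.
End Aux4.

Theorem proposition2p3 (R : realType) :
  (* Pos(H) is an R_{>=0}-module (closed under 0, +, non-negative scaling) *)
  (forall n : nat,
     [/\ posop (0 : 'M[R[i]]_n),
         forall A B : 'M[R[i]]_n, posop A -> posop B -> posop (A + B)
       & forall (r : R[i]) (A : 'M[R[i]]_n), 0 <= r -> posop A -> posop (r *: A)])
  (* Pos is a functor FdHilb -> Mod_{R>=0}: Pos(C) is well defined and linear *)
  /\ (forall (m n : nat) (Cm : 'M[R[i]]_(m, n)),
     [/\ forall A, posop A -> posop (PosMap Cm A),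
         forall A B, posop A -> posop B ->
           PosMap Cm (A + B) = PosMap Cm A + PosMap Cm B
       & forall (r : R[i]) A, 0 <= r -> posop A ->
           PosMap Cm (r *: A) = r *: PosMap Cm A])
  (* hs_Pos is a well-defined linear isomorphism Pos(H) -> Pos(H)^* *)
  /\ (forall n : nat,
     [/\ (* well defined: hs(A) is a linear map Pos(H) -> R_{>=0} *)
         forall A : 'M[R[i]]_n, posop A -> pos_dual_map (hs A),
         (* hs is linear in A *)
         forall A1 A2 B : 'M[R[i]]_n, posop A1 -> posop A2 -> posop B ->
           hs (A1 + A2) B = hs A1 B + hs A2 B,
         forall (r : R[i]) (A B : 'M[R[i]]_n), 0 <= r -> posop A -> posop B ->
           hs (r *: A) B = r * hs A B,
         (* injective *)
         forall A1 A2 : 'M[R[i]]_n, posop A1 -> posop A2 ->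
           (forall B, posop B -> hs A1 B = hs A2 B) -> A1 = A2
       & (* surjective *)
         forall f : 'M[R[i]]_n -> R[i], pos_dual_map f ->
           exists2 A : 'M[R[i]]_n, posop A & forall B, posop B -> f B = hs A B])
  (* naturality: Pos(C)^* o hs_K = hs_H o Pos(C^dagger) *)
  /\ (forall (m n : nat) (Cm : 'M[R[i]]_(m, n)) (A : 'M[R[i]]_m) (B : 'M[R[i]]_n),
        posop A -> posop B ->
        hs A (PosMap Cm B) = hs (PosMap (adj Cm) A) B)
  (* map of adjunctions: for every C : H -> K (i.e. C^dagger : K -> H in FdHilb^op),
     the transpose under ((-) -o R>=0) -| ((-) -o R>=0) of hs_K o Pos(C)
     equals hs_H o Pos(C^dagger) *)
  /\ (forall (m n : nat) (Cm : 'M[R[i]]_(m, n)) (A : 'M[R[i]]_n) (B : 'M[R[i]]_m),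
        posop A -> posop B ->
        hs (PosMap Cm A) B = hs (PosMap (adj Cm) B) A).
Proof.
split.
  move=> n; split; [exact: posop0 | exact: posopD | move=> r A r0 pA; exact: posopZ].
split.
  move=> m n Cm; split.
  - move=> A pA x; change (0 <= sf (PosMap Cm A) x x).
    have -> : sf (PosMap Cm A) x x = sf A (adj Cm *m x) (adj Cm *m x).
      by rewrite /sf /PosMap dag_mul dagK !mulmxA.
    exact: pA.
  - by move=> A B _ _; rewrite /PosMap mulmxDr mulmxDl.
  - by move=> r A _ _; rewrite /PosMap -scalemxAr -scalemxAl.
split.
  move=> n; split.
  - move=> A pA; split.
    + by move=> B pB; apply: tr_ge0.
    + by move=> B1 B2 _ _; rewrite /hs mulmxDr mxtraceD.
    + by move=> r B _ _; rewrite /hs -scalemxAr mxtraceZ.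
  - by move=> A1 A2 B _ _ _; rewrite /hs mulmxDl mxtraceD.
  - by move=> r A B _ _ _; rewrite /hs -scalemxAl mxtraceZ.
  - move=> A1 A2 _ _ h; apply/eqP; rewrite -subr_eq0; apply/eqP.
    apply: quad_zero => x; rewrite sfDm sfNm -!sf_quad.
    by have := h _ (posop_op x); rewrite /hs => ->; rewrite subrr.
  - by move=> f hf; apply: surj.
split.
  by move=> m n Cm A B _ _; rewrite /hs /PosMap dagK mulmxA mxtrace_mulC !mulmxA.
move=> m n Cm A B _ _; rewrite /hs /PosMap dagK -mulmxA.
by rewrite [LHS]mxtrace_mulC !mulmxA.
Qed.
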